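(* Let $S,T\subseteq\mathbb{Z}_{>0}$ be finite and $S'\subseteq S$. Then $T\triangleleft S'\subseteq T\triangleleft S$.
   Context: For finite $S,T\subseteq\mathbb{Z}_{>0}$, $T\triangleleft S$ is computed by going through the elements of $S$ from largest to smallest; each $s$ picks the largest element of $T$ that is less than $s$ and not yet picked (if one exists); $T\triangleleft S$ is the set of picked elements. *)

(* Defs.v *)
From mathcomp Require Import all_boot.
From mathcomp Require Import finmap.
Set Implicit Arguments. Unset Strict Implicit. Unset Printing Implicit Defensive.
Open Scope fset_scope.

Definition tri_step (T : {fset nat}) (picked : seq nat) (s : nat) : seq nat :=
  let cands := [seq t <- enum_fset T | (t < s) && (t \notin picked)] in
  if cands is [::] then picked else (\max_(t <- cands) t) :: picked.

Definition tri (T S : {fset nat}) : {fset nat} :=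
  [fset x | x in foldl (tri_step T) [::] (sort geq (enum_fset S))].

Notation "T ◁ S" := (tri T S) (at level 40).

(* Main.v *)
Require Import Defs.
From mathcomp Require Import all_boot.
From mathcomp Require Import finmap.
Open Scope fset_scope.

Lemma max_mem (c : seq nat) : c != [::] -> \max_(t <- c) t \in c.
Proof.
elim: c => // x c IH _; rewrite big_cons inE.
case: (altP (c =P [::])) => [->|/IH H]; first by rewrite big_nil maxn0 eqxx.
by rewrite /maxn; case: ifP => _; [rewrite H orbT | rewrite eqxx].
Qed.

Lemma step_sup T B s : {subset B <= tri_step T B s}.
Proof.
move=> z zB; rewrite /tri_step.
by case: [seq t <- enum_fset T | (t < s) && (t \notin B)] => // ? ?; rewrite inE zB orbT.
Qed.

Lemma step_mono T A B s : {subset A <= B} ->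
  {subset tri_step T A s <= tri_step T B s}.
Proof.
move=> AB z.
rewrite {1}/tri_step.
case EA: [seq t <- enum_fset T | (t < s) && (t \notin A)] => [|a ca].
  by move=> /AB; apply: step_sup.
rewrite inE => /orP [/eqP ->|]; last by move=> /AB; apply: step_sup.
set mA := \max_(t <- a :: ca) t.
have mAin : mA \in a :: ca by apply: max_mem.
case: (boolP (mA \in B)) => [|nB]; first by apply: step_sup.
have mAT : mA \in [seq t <- enum_fset T | (t < s) && (t \notin B)].
  move: mAin; rewrite -EA !mem_filter => /andP [/andP [-> _] ->].
  by rewrite nB.
rewrite /tri_step.
case EB: [seq t <- enum_fset T | (t < s) && (t \notin B)] => [|b cb].
  by rewrite EB in mAT.
rewrite inE; apply/orP; left.
set mB := \max_(t <- b :: cb) t.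
have mBin : mB \in b :: cb by apply: max_mem.
have h1 : mA <= mB by rewrite /mB -EB; exact: (@leq_bigmax_seq nat _ xpredT (fun t => t) mA mAT).
have mBA : mB \in a :: ca.
  move: mBin; rewrite -EB -EA !mem_filter => /andP [/andP [-> nb] ->].
  by rewrite andbT; apply/negP => /AB; rewrite (negbTE nb).
have h2 : mB <= mA by rewrite /mA; exact: (@leq_bigmax_seq nat _ xpredT (fun t => t) mB mBA).
by rewrite eq_sym eqn_leq h1 h2.
Qed.

Lemma fold_mono T s2 : forall s1 A B, {subset A <= B} -> subseq s1 s2 ->
  {subset foldl (tri_step T) A s1 <= foldl (tri_step T) B s2}.
Proof.
elim: s2 => [|y s2 IH] s1 A B AB.
  by rewrite subseq0 => /eqP ->.
case: s1 => [|x s1] /=.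
  move=> _; apply: (IH [::] A (tri_step T B y)) => //.
    by move=> z /AB; apply: step_sup.
  exact: sub0seq.
case: eqP => [-> | _] H.
  by apply: IH => //; apply: step_mono.
apply: (IH (x :: s1)) => //.
by move=> z /AB; apply: step_sup.
Qed.

Theorem lemma4p14 (S S' T : {fset nat}) :
  (forall x, x \in S -> 0 < x) -> (forall x, x \in T -> 0 < x) ->
  S' `<=` S -> (T ◁ S') `<=` (T ◁ S).
Proof.
move=> _ _ sub.
have gtr : transitive geq by move=> a b c h1 h2; exact: leq_trans h2 h1.
have Hsub : subseq (sort geq (enum_fset S')) (sort geq (enum_fset S)).
  have -> : sort geq (enum_fset S') =
            filter (mem (enum_fset S')) (sort geq (enum_fset S)).
    apply: (sorted_eq gtr).
    - by move=> a b /andP [h1 h2]; apply: anti_leq; apply/andP; split; [exact: h2 | exact: h1].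
    - by apply: sort_sorted => a b; exact: leq_total.
    - apply: sorted_filter; first exact: gtr.
      by apply: sort_sorted => a b; exact: leq_total.
    apply: uniq_perm.
    - by rewrite sort_uniq fset_uniq.
    - by apply: filter_uniq; rewrite sort_uniq fset_uniq.
    move=> z; rewrite mem_filter mem_sort mem_sort /=.
    case: (boolP (z \in enum_fset S')) => //= h.
    by have := fsubsetP sub z h.
  exact: filter_subseq.
apply/fsubsetP => z; rewrite /tri !inE.
move=> H; exact: (@fold_mono T _ _ [::] [::] (fun _ x => x) Hsub z H).
Qed.
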